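(* Let $\mathrm P$ be a probability measure on $\mathbb{R}^d$ with Lebesgue density $p$ supported on the convex open set $\mathcal X\subseteq\mathbb{R}^d$, and assume $p$ satisfies Assumption A. Let $\varphi$ be as in the context. Then $\partial\varphi(\mathcal X)\cap\mathbb S_{d-1}=\emptyset$, i.e. no subgradient of $\varphi$ at a point of $\mathcal X$ has Euclidean norm $1$.
   Context: $\mathbb{B}_d$ is the open unit ball of $\mathbb{R}^d$, $\mathbb S_{d-1}=\bar{\mathbb B}_d\setminus\mathbb B_d$. $\mathrm U_d$ is the spherical uniform distribution on $\mathbb B_d$, with density $u_d(\mathbf x)=\frac{1}{a_d|\mathbf x|^{d-1}}\mathbf 1[\mathbf x\in\mathbb B_d\setminus\{\mathbf 0\}]$, $a_d=2\pi^{d/2}/\Gamma(d/2)$. $\psi$ is the convex function on $\mathbb B_d$, normalized by $\psi(\mathbf 0)=0$, whose a.e. gradient pushes $\mathrm U_d$ forward to $\mathrm P$ (McCann), extended lsc to $\mathbb{R}^d$ ($+\infty$ outside $\bar{\mathbb B}_d$), and $\varphi(\mathbf x)=\sup_{\mathbf u\in\mathbb B_d}(\langle\mathbf u,\mathbf x\rangle-\psi(\mathbf u))$, so that $\nabla\varphi\sharp\mathrm P=\mathrm U_d$. $\partial\varphi$ denotes the subdifferential and $\partial\varphi(A)=\bigcup_{\mathbf x\in A}\partial\varphi(\mathbf x)$. Assumption A: for every $R>0$ there exist $0<\lambda_R\le\Lambda_R$ with $\lambda_R\le p(\mathbf x)\le\Lambda_R$ for all $\mathbf x\in\mathcal X$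 with $|\mathbf x|<R$. *)

(* Defs.v *)
From HB Require Import structures.
From mathcomp Require Import all_boot all_order all_algebra.
From mathcomp Require Import all_classical all_reals all_analysis.
Set Implicit Arguments. Unset Strict Implicit. Unset Printing Implicit Defensive.
Import Order.TTheory GRing.Theory Num.Theory.
Local Open Scope classical_set_scope.
Local Open Scope ring_scope.

(* Points of R^d are d-tuples of reals (these carry the product = Borel
   sigma-algebra of the library). *)
Section Euclid.
Variables (R : realType) (d : nat).
Definition vadd (x y : d.-tuple R) : d.-tuple R := [tuple tnth x i + tnth y i | i < d].
Definition vsub (x y : d.-tuple R) : d.-tuple R := [tuple tnth x i - tnth y i | i < d].
Definition vscale (t : R) (x : d.-tuple R) : d.-tuple R := [tuple t * tnth x i | i < d].
Definition vzero : d.-tuple R := [tuple (0:R) | i < d].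
Definition dotp (x y : d.-tuple R) : R := \sum_(i < d) tnth x i * tnth y i.
Definition enorm (x : d.-tuple R) : R := Num.sqrt (dotp x x).

Definition unit_ball : set (d.-tuple R) := [set x | enorm x < 1].

Definition convex_set_Rd (X : set (d.-tuple R)) : Prop :=
  forall x y t, X x -> X y -> 0 <= t <= 1 ->
    X (vadd (vscale t x) (vscale (1 - t) y)).

Definition euclid_open (X : set (d.-tuple R)) : Prop :=
  forall x, X x -> exists2 e : R, 0 < e & forall z, enorm (vsub z x) < e -> X z.

Definition convex_on_Rd (D : set (d.-tuple R)) (f : d.-tuple R -> R) : Prop :=
  forall x y t, D x -> D y -> 0 <= t <= 1 ->
    f (vadd (vscale t x) (vscale (1 - t) y)) <= t * f x + (1 - t) * f y.

Definition has_gradient (f : d.-tuple R -> R) (u v : d.-tuple R) : Prop :=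
  forall e : R, 0 < e -> exists2 del : R, 0 < del & forall h,
    enorm h < del -> `|f (vadd u h) - f u - dotp v h| <= e * enorm h.

(* Lebesgue measure on R^d: the (unique) Borel measure giving every closed
   box its volume *)
Definition is_lebesgue (lam : {measure set (d.-tuple R) -> \bar R}) : Prop :=
  forall a b : d.-tuple R, (forall i, tnth a i <= tnth b i) ->
    lam [set x | forall i, tnth a i <= tnth x i <= tnth b i] =
    (\prod_(i < d) (tnth b i - tnth a i))%:E.

Definition Euler_Gamma (s : R) : R :=
  fine (\int[@lebesgue_measure R]_(t in `]0%R, +oo[) (powR t (s - 1) * expR (- t))%:E).

Definition a_const : R := 2 * powR pi (d%:R / 2) / Euler_Gamma (d%:R / 2).

(* density of the spherical uniform distribution U_d *)
Definition u_dens (x : d.-tuple R) : R :=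
  if (0 < enorm x) && (enorm x < 1) then (a_const * enorm x ^+ d.-1)^-1 else 0.

Definition U_meas (lam : {measure set (d.-tuple R) -> \bar R})
  (A : set (d.-tuple R)) : \bar R := \int[lam]_(x in A) (u_dens x)%:E.

Definition legendre_ball (psi : d.-tuple R -> R) (x : d.-tuple R) : \bar R :=
  ereal_sup [set ((dotp u x - psi u)%:E) | u in unit_ball].

Definition subgradient (f : d.-tuple R -> \bar R) (x y : d.-tuple R) : Prop :=
  f x \is a fin_num /\ forall z, (f x + (dotp y (vsub z x))%:E <= f z)%E.
End Euclid.

(* Main.v *)
Require Import Defs.
From HB Require Import structures.
From mathcomp Require Import all_boot all_order all_algebra.
From mathcomp Require Import all_classical all_reals all_analysis.
From mathcomp Require Import measurable_realfun.
From mathcomp Require Import ring lra.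
Import Order.TTheory GRing.Theory Num.Theory.
Set Implicit Arguments. Unset Strict Implicit.
Local Open Scope classical_set_scope.
Local Open Scope ring_scope.

Section Alg.
Variables (R : realType) (d : nat).
Implicit Types (a b c u v w : d.-tuple R).

Lemma tnth_vadd a b i : tnth (vadd a b) i = tnth a i + tnth b i.
Proof. by rewrite /vadd tnth_mktuple. Qed.
Lemma tnth_vsub a b i : tnth (vsub a b) i = tnth a i - tnth b i.
Proof. by rewrite /vsub tnth_mktuple. Qed.
Lemma tnth_vscale t a i : tnth (vscale t a) i = t * tnth a i.
Proof. by rewrite /vscale tnth_mktuple. Qed.

Lemma dotpC a b : dotp a b = dotp b a.
Proof. by apply: eq_bigr => i _; rewrite mulrC. Qed.
Lemma dotpDl a b c : dotp (vadd a b) c = dotp a c + dotp b c.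
Proof. by rewrite /dotp -big_split; apply: eq_bigr => i _; rewrite tnth_vadd mulrDl. Qed.
Lemma dotpBl a b c : dotp (vsub a b) c = dotp a c - dotp b c.
Proof. rewrite /dotp -sumrB; apply: eq_bigr => i _; rewrite tnth_vsub mulrBl //. Qed.
Lemma dotpZl t a c : dotp (vscale t a) c = t * dotp a c.
Proof. rewrite /dotp mulr_sumr; apply: eq_bigr => i _; rewrite tnth_vscale mulrA //. Qed.
Lemma dotpDr a b c : dotp c (vadd a b) = dotp c a + dotp c b.
Proof. by rewrite dotpC dotpDl !(dotpC c). Qed.
Lemma dotpBr a b c : dotp c (vsub a b) = dotp c a - dotp c b.
Proof. by rewrite dotpC dotpBl !(dotpC c). Qed.
Lemma dotpZr t a c : dotp c (vscale t a) = t * dotp c a.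
Proof. by rewrite dotpC dotpZl dotpC. Qed.
Lemma dotp_ge0 a : 0 <= dotp a a.
Proof. by apply: sumr_ge0 => i _; rewrite -expr2 sqr_ge0. Qed.
Lemma enorm_ge0 a : 0 <= enorm a.
Proof. exact: sqrtr_ge0. Qed.
Lemma enorm_sq a : enorm a ^+ 2 = dotp a a.
Proof. by rewrite /enorm sqr_sqrtr // dotp_ge0. Qed.

Lemma dotp_eq0 a : dotp a a = 0 -> forall i, tnth a i = 0.
Proof.
move=> /eqP; rewrite /dotp psumr_eq0; last by move=> i _; rewrite -expr2 sqr_ge0.
by move=> /allP H i; apply/eqP; rewrite -sqrf_eq0 expr2; apply/eqP/eqP/H; rewrite mem_index_enum.
Qed.

Lemma coord_le a i : tnth a i ^+ 2 <= dotp a a.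
Proof.
rewrite /dotp (bigD1 i) //= -expr2 lerDl; apply: sumr_ge0 => j _; by rewrite -expr2 sqr_ge0.
Qed.

Lemma CS a b : dotp a b <= enorm a * enorm b.
Proof.
have key : forall s, 0 < s -> 2 * dotp a b <= s * dotp a a + dotp b b / s.
  move=> s s0.
  have := dotp_ge0 (vsub (vscale s a) b).
  rewrite !dotpBl !dotpBr !dotpZl !dotpZr (dotpC b a) => H.
  have H2 : 0 <= (s * (s * dotp a a) - s * dotp a b - (s * dotp a b - dotp b b)) / s.
    by rewrite divr_ge0 // ltW.
  have sn : s != 0 by rewrite gt_eqF.
  have E : s * dotp a a + dotp b b / s - 2 * dotp a b = (s * (s * dotp a a) - s * dotp a b - (s * dotp a b - dotp b b)) / s.
    by field.
  lra.
have [na0|na0] := eqVneq (enorm a) 0.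
  have aa : dotp a a = 0 by rewrite -enorm_sq na0 expr0n.
  have := dotp_eq0 aa => a0.
  by rewrite /dotp big1 ?na0 ?mul0r // => i _; rewrite a0 mul0r.
have [nb0|nb0] := eqVneq (enorm b) 0.
  have bb : dotp b b = 0 by rewrite -enorm_sq nb0 expr0n.
  have := dotp_eq0 bb => b0.
  by rewrite /dotp big1 ?nb0 ?mulr0 // => i _; rewrite b0 mulr0.
have pa : 0 < enorm a by rewrite lt0r na0 enorm_ge0.
have pb : 0 < enorm b by rewrite lt0r nb0 enorm_ge0.
have := key (enorm b / enorm a) (divr_gt0 pb pa).
rewrite -!enorm_sq => H.
have E : enorm b / enorm a * enorm a ^+ 2 + enorm b ^+ 2 / (enorm b / enorm a) = 2 * (enorm a * enorm b).
  move: na0 nb0; move: (enorm a) (enorm b) => A B an bn.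
  by field; rewrite an bn.
rewrite E in H. lra.
Qed.

Lemma tri a b : enorm (vadd a b) <= enorm a + enorm b.
Proof.
have h1 : 0 <= enorm a + enorm b by rewrite addr_ge0 ?enorm_ge0.
rewrite -(ler_pXn2r (_ : 0 < 2)%N) ?nnegrE ?enorm_ge0 //.
rewrite enorm_sq dotpDl !dotpDr (dotpC b a) sqrrD !enorm_sq.
have := CS a b. lra.
Qed.

Lemma enorm_lt a r : 0 <= r -> dotp a a < r ^+ 2 -> enorm a < r.
Proof. move=> r0 H; rewrite -(ltr_pXn2r (_ : 0 < 2)%N) ?nnegrE ?enorm_ge0 // enorm_sq //. Qed.

Lemma enorm_le a r : 0 <= r -> dotp a a <= r ^+ 2 -> enorm a <= r.
Proof. move=> r0 H; rewrite -(ler_pXn2r (_ : 0 < 2)%N) ?nnegrE ?enorm_ge0 // enorm_sq //. Qed.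

Lemma coord_enorm a i : `|tnth a i| <= enorm a.
Proof.
rewrite -(ler_pXn2r (_ : 0 < 2)%N) ?nnegrE ?enorm_ge0 // enorm_sq real_normK ?num_real //.
exact: coord_le.
Qed.


Lemma enormZ t a : enorm (vscale t a) = `|t| * enorm a.
Proof.
rewrite /enorm dotpZl dotpZr mulrA -expr2 sqrtrM ?sqr_ge0 // sqrtr_sqr //.
Qed.

Lemma vecP a b : (forall i, tnth a i = tnth b i) -> a = b.
Proof. exact: eq_from_tnth. Qed.

Lemma ball_convex u u' t : unit_ball u -> unit_ball u' -> 0 <= t <= 1 ->
  unit_ball (vadd (vscale t u') (vscale (1 - t) u)).
Proof.
rewrite /unit_ball /= => hu hu' /andP[t0 t1].
apply: le_lt_trans (tri _ _) _.
rewrite !enormZ (ger0_norm t0) (ger0_norm (_ : 0 <= 1 - t)); last by lra.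
have := enorm_ge0 u; have := enorm_ge0 u'.
have [->|tp] := eqVneq t 0; first by rewrite subr0 mul0r mul1r add0r.
have tp' : 0 < t by rewrite lt0r tp t0.
nra.
Qed.

Lemma fenchel (psi : d.-tuple R -> R) u u' G :
  convex_on_Rd (@unit_ball R d) psi -> unit_ball u -> unit_ball u' ->
  has_gradient psi u G -> dotp G (vsub u' u) <= psi u' - psi u.
Proof.
move=> cvx hu hu' hg.
set w := vsub u' u.
have main : forall e, 0 < e -> dotp G w <= psi u' - psi u + e * enorm w.
  move=> e e0; have [del del0 Hd] := hg e e0.
  have w0 := enorm_ge0 w.
  set t := del / (del + enorm w + 1).
  have den0 : 0 < del + enorm w + 1 by lra.
  have t0 : 0 < t by rewrite divr_gt0.
  have t1 : t <= 1 by rewrite ler_pdivrMr // mul1r; lra.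
  have tw : t * enorm w < del.
    rewrite /t mulrAC ltr_pdivrMr // mulrDr; nra.
  have Hh := Hd (vscale t w).
  rewrite enormZ (ger0_norm (ltW t0)) in Hh.
  have {Hh} := Hh tw.
  have -> : vadd u (vscale t w) = vadd (vscale t u') (vscale (1 - t) u).
    apply: vecP => i; rewrite !(tnth_vadd, tnth_vscale, tnth_vsub); ring.
  rewrite dotpZr ler_norml => /andP[H1 _].
  have Hc := cvx u' u t hu' hu (introT andP (conj (ltW t0) t1)).
  have H3 : t * dotp G w <= t * (psi u' - psi u + e * enorm w) by nra.
  by rewrite -(ler_pM2l t0).
apply/ler_addgt0Pr => e e0.
have w0 := enorm_ge0 w.
have hw1 : 0 < enorm w + 1 by lra.
have := main (e / (enorm w + 1)) (divr_gt0 e0 hw1).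
move=> H; apply: le_trans H _; rewrite lerD2l mulrAC ler_pdivrMr //.
nra.
Qed.
End Alg.

Section Leg.
Variables (R : realType) (d : nat).

Lemma key_ineq (psi : d.-tuple R -> R) u v x y :
  convex_on_Rd (@unit_ball R d) psi -> unit_ball u -> has_gradient psi u v ->
  subgradient (legendre_ball psi) x y ->
  0 <= dotp (vsub u y) (vsub v x).
Proof.
move=> cvx hu hg [fx sg].
have up : (legendre_ball psi v <= (dotp u v - psi u)%:E)%E.
  apply/ge_ereal_sup => _ [u' hu' <-]; rewrite lee_fin.
  have := fenchel cvx hu hu' hg.
  rewrite dotpBr (dotpC v u') (dotpC v u); lra.
have lo : ((dotp u x - psi u)%:E <= legendre_ball psi x)%E.
  by apply: ereal_sup_ubound; exists u.
have := sg v.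
rewrite -(fineK fx) in lo * => H.
have H2 := le_trans H up.
rewrite -EFinD !lee_fin in H2 lo.
rewrite dotpBl !dotpBr (dotpC u v) (dotpC y v).
rewrite dotpBr (dotpC y v) in H2.
rewrite (dotpC u v) in H2. lra.
Qed.
End Leg.

Section Geo.
Variables (R : realType) (d : nat).
Implicit Types (u v x y : d.-tuple R).

Lemma near_y u v x y (t eta : R) : enorm y = 1 -> enorm u < 1 -> 0 < t ->
  0 <= dotp (vsub u y) (vsub v x) ->
  enorm (vsub (vsub v x) (vscale t y)) <= eta ->
  enorm (vsub u y) * t <= 2 * eta.
Proof.
move=> ny nu t0 H ne.
set e := vsub (vsub v x) (vscale t y).
have vx : vsub v x = vadd (vscale t y) e.
  apply: vecP => i; rewrite !(tnth_vadd, tnth_vsub, tnth_vscale); ring.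
rewrite vx dotpDr dotpZr dotpBl in H.
have yy : dotp y y = 1 by rewrite -enorm_sq ny expr1n.
have uu : dotp u u < 1.
  by rewrite -enorm_sq -(expr1n _ 2%N) ltrXn2r ?enorm_ge0.
have DD : enorm (vsub u y) ^+ 2 = dotp u u - 2 * dotp u y + 1.
  by rewrite enorm_sq dotpBl !dotpBr (dotpC y u) yy; ring.
have cs := CS (vsub u y) e.
have D0 := enorm_ge0 (vsub u y).
have e0 := enorm_ge0 e.
set D := enorm (vsub u y) in DD cs D0 *.
rewrite yy in H.
have H3 : t * D ^+ 2 <= 2 * D * eta by nra.
have [->|Dp] := eqVneq D 0; first by rewrite mul0r; lra.
have Dp' : 0 < D by rewrite lt0r Dp D0.
nra.
Qed.

Lemma enorm_coords (a : d.-tuple R) (r : R) : 0 <= r -> (forall i, `|tnth a i| <= r) ->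
  dotp a a <= d%:R * r ^+ 2.
Proof.
move=> r0 H; rewrite /dotp.
apply: le_trans (_ : _ <= \sum_(i < d) r ^+ 2) _.
  apply: ler_sum => i _; rewrite -expr2 -real_normK ?num_real //.
  by rewrite lerXn2r ?nnegrE ?normr_ge0 ?H.
by rewrite sumr_const card_ord mulr_natl.
Qed.
End Geo.

Section Meas.
Import HBNNSimple.
Variables (R : realType) (d : nat).

Definition cube (c : d.-tuple R) (r : R) : set (d.-tuple R) :=
  [set z | forall i, tnth c i - r <= tnth z i <= tnth c i + r].

Lemma cube_measurable c r : measurable (cube c r).
Proof.
have -> : cube c r = \bigcap_(i in [set: 'I_d])
    ([set: d.-tuple R] `&` ((fun z => tnth z i) @^-1` `[tnth c i - r, tnth c i + r]%classic)).
  apply/seteqP; split => z /=.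
    by move=> H i _; split => //=; rewrite in_itv /= H.
  by move=> H i; have [_ /=] := H i I; rewrite in_itv.
apply: fin_bigcap_measurable; first exact: finite_finset.
by move=> i _; apply: measurable_tnth => //; exact: measurable_itv.
Qed.

Lemma cube_lam (lam : {measure set (d.-tuple R) -> \bar R}) c r :
  is_lebesgue lam -> 0 <= r -> lam (cube c r) = ((2 * r) ^+ d)%:E.
Proof.
move=> hl r0.
have := hl [tuple tnth c i - r | i < d] [tuple tnth c i + r | i < d].
rewrite /cube.
have E : [set x | forall i, tnth [tuple tnth c i - r | i < d] i <= tnth x i <= tnth [tuple tnth c i + r | i < d] i]
   = [set z | forall i, tnth c i - r <= tnth z i <= tnth c i + r].
  by apply/seteqP; split => z /= H i; move: (H i); rewrite !tnth_mktuple.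
rewrite E => ->; last by move=> i; rewrite !tnth_mktuple; lra.
congr (_%:E).
rewrite (eq_bigr (fun=> 2 * r)); last by move=> i _; rewrite !tnth_mktuple; ring.
by rewrite prodr_const card_ord.
Qed.

Lemma le_integral_nm (lam : {measure set (d.-tuple R) -> \bar R}) (D N : set (d.-tuple R))
  (f h : d.-tuple R -> \bar R) : measurable D -> measurable N -> lam N = 0 ->
  (forall x, D x -> (0 <= f x)%E) -> measurable_fun [set: d.-tuple R] h -> (forall x, (0 <= h x)%E) ->
  (forall x, D x -> ~ N x -> (f x <= h x)%E) ->
  (\int[lam]_(x in D) f x <= \int[lam]_(x in D) h x)%E.
Proof.
move=> mD mN N0 f0 mh h0 fh.
rewrite ge0_integralE //.
apply/ge_ereal_sup => _ [s sf <-].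
have := integral_nnsfun lam measurableT s; rewrite patch_setT => <-.
rewrite [X in (_ <= X)%E]integral_mkcond.
apply: ae_ge0_le_integral => //.
- by move=> x _; rewrite lee_fin fun_ge0.
- exact: measurableT_comp.
- by move=> x _; rewrite /patch; case: ifP.
- apply/(measurable_restrictT _ _).1 => //; exact: measurable_funS mh.
exists N; split => // x /= Hx; apply: contra_notP Hx => Nx _.
have := sf x; rewrite /patch; case: ifPn => //.
by rewrite inE => Dx; move/le_trans; apply; apply: fh.
Qed.
End Meas.

Section Dens.
Variables (R : realType) (d : nat).

Lemma a_const_ge0 : 0 <= a_const R d.
Proof.
rewrite /a_const; apply: divr_ge0; first by rewrite mulr_ge0 ?powR_ge0.
apply: fine_ge0; apply: integral_ge0 => t _; rewrite lee_fin.
by rewrite mulr_ge0 ?powR_ge0 // expR_ge0.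
Qed.

Lemma u_dens_ge0 (x : d.-tuple R) : 0 <= u_dens x.
Proof.
rewrite /u_dens; case: ifP => // _.
by rewrite invr_ge0 mulr_ge0 ?a_const_ge0 // exprn_ge0 // enorm_ge0.
Qed.

Definition Cd : R := (a_const R d * (2^-1) ^+ d.-1)^-1.

Lemma Cd_ge0 : 0 <= Cd.
Proof. by rewrite invr_ge0 mulr_ge0 ?a_const_ge0 // exprn_ge0 // invr_ge0. Qed.

Lemma u_dens_le (x : d.-tuple R) : 2^-1 <= enorm x -> u_dens x <= Cd.
Proof.
move=> hx; rewrite /u_dens /Cd; case: ifP => _; last exact: Cd_ge0.
have [->|a0] := eqVneq (a_const R d) 0; first by rewrite !mul0r invr0.
have ap : 0 < a_const R d by rewrite lt0r a0 a_const_ge0.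
have h2 : 0 < 2^-1 :> R by rewrite invr_gt0.
have xp : 0 < enorm x by apply: lt_le_trans hx.
rewrite lef_pV2; first last.
- by rewrite posrE; apply: mulr_gt0 => //; apply: exprn_gt0.
- by rewrite posrE; apply: mulr_gt0 => //; apply: exprn_gt0.
by rewrite ler_pM2l // lerXn2r // nnegrE ?enorm_ge0 // ltW.
Qed.
End Dens.

Section Aux2.
Variables (R : realType) (d : nat).
Implicit Types (a b c x y z u : d.-tuple R).

Lemma enorm_vsubC a b : enorm (vsub a b) = enorm (vsub b a).
Proof.
rewrite /enorm /dotp; congr Num.sqrt; apply: eq_bigr => i _; rewrite !tnth_vsub; ring.
Qed.

Lemma vdecomp z x : z = vadd x (vsub z x).
Proof. by apply: vecP => i; rewrite tnth_vadd tnth_vsub; ring. Qed.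

Lemma cube_err x y t z r : 0 <= r -> cube (vadd x (vscale t y)) r z ->
  enorm (vsub (vsub z x) (vscale t y)) <= (d.+1)%:R * r.
Proof.
move=> r0 hz; apply: enorm_le; first by rewrite mulr_ge0.
apply: le_trans (enorm_coords (r := r) _ _) _ => //.
  move=> i; have := hz i; rewrite !(tnth_vsub, tnth_vadd, tnth_vscale) ler_norml => H.
  lra.
rewrite exprMn; apply: ler_wpM2r; first exact: sqr_ge0.
by rewrite -natrX ler_nat (leq_trans (leqnSn d)) // expnS leq_pmulr // expn_gt0.
Qed.
End Aux2.

Lemma bigsetU_mem (T : Type) n (F : 'I_n -> set T) z :
  (\big[setU/set0]_(k < n) F k) z -> exists k, F k z.
Proof.
elim/big_rec: _ => [//|k S _ IH [Hk|HS]]; [by exists k | exact: IH].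
Qed.

Unset Implicit Arguments.
Set Strict Implicit.

Theorem lemma2p2 (R : realType) (d : nat)
  (lam : {measure set (d.-tuple R) -> \bar R})
  (P : probability (d.-tuple R) R)
  (p : d.-tuple R -> R) (X : set (d.-tuple R))
  (psi : d.-tuple R -> R) (g : d.-tuple R -> d.-tuple R) :
  is_lebesgue lam ->
  convex_set_Rd X -> euclid_open X ->
  measurable_fun setT p -> (forall x, 0 <= p x) -> (forall x, ~ X x -> p x = 0) ->
  (forall A, measurable A -> (P A = \int[lam]_(x in A) (p x)%:E)%E) ->
  (forall r : R, 0 < r -> exists lr : R, exists Lr : R,
     [/\ 0 < lr, lr <= Lr &
         forall x, X x -> enorm x < r -> lr <= p x <= Lr]) ->
  convex_on_Rd (@unit_ball R d) psi -> psi (vzero R d) = 0 ->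
  measurable_fun setT g ->
  {ae lam, forall u, unit_ball u -> has_gradient psi u (g u)} ->
  (forall A, measurable A -> (U_meas lam (g @^-1` A) = P A)%E) ->
  forall x y, X x -> subgradient (legendre_ball psi) x y -> enorm y <> 1.
Proof.
move=> hl cvxX openX mp p0 pX Pp assA cvx psi0 mg aeg push x y Xx sub ny.
have [e0 e0p He0] := openX x Xx.
pose s := e0 / 2.
have sp : 0 < s by rewrite divr_gt0.
have [lr [Lr [lrp _ Hlr]]] : exists lr Lr, [/\ 0 < lr, lr <= Lr &
    forall z, X z -> enorm z < enorm x + e0 + 1 -> lr <= p z <= Lr].
  by apply: assA; have := enorm_ge0 x; lra.
case: aeg => Nn [mNn Nn0 HNn].
pose K : R := (d.+1)%:R.
have Kp : 0 < K by rewrite ltr0n.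
pose W := s / (3 * K).
have Wp : 0 < W by rewrite divr_gt0 // mulr_gt0.
pose C := Cd R d.
pose M := C * 2 ^+ d / (lr * W ^+ d).
pose NN := (Num.truncn M).+3.
have NNM : M < NN%:R.
  apply: lt_le_trans (truncnS_gt M) _; rewrite ler_nat /NN; apply: leq_trans (leqnSn _) (leqnSn _).
have NN3 : 3 <= NN%:R :> R by rewrite (ler_nat R 3 NN) /NN.
have NNp : 0 < NN%:R :> R by lra.
pose del := s / (2 * NN%:R).
have delp : 0 < del by rewrite divr_gt0 // mulr_gt0.
have delE : del * (2 * NN%:R) = s by rewrite /del mulfVK // mulf_neq0 // gt_eqF.
pose a := del / (3 * K).
have ap : 0 < a by rewrite divr_gt0 // mulr_gt0.
have KaE : K * a = del / 3 by rewrite /a; field; rewrite gt_eqF.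
pose t := fun k : nat => s / 2 + k%:R * del.
pose Q := fun k : 'I_NN => cube (vadd x (vscale (t k) y)) a.
pose rho : R := NN%:R^-1.
pose B := cube y rho.
have ht : forall k : 'I_NN, s / 2 <= t k /\ t k + del <= s.
  move=> k; have kN : (k.+1 <= NN)%N := ltn_ord k.
  have : (k.+1)%:R <= NN%:R :> R by rewrite ler_nat.
  rewrite -natr1 => H; split; first by rewrite /t lerDl mulr_ge0 // ltW.
  rewrite /t; nra.
have yy : dotp y y = 1 by rewrite -enorm_sq ny expr1n.
have herr : forall k z, Q k z -> enorm (vsub (vsub z x) (vscale (t k) y)) <= del / 3.
  by move=> k z hz; rewrite -KaE; exact: cube_err (ltW ap) hz.
have hX : forall k z, Q k z -> X z /\ enorm z < enorm x + e0 + 1.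
  move=> k z hz; have he := herr k z hz; have [h1 h2] := ht k.
  have hzx : enorm (vsub z x) < e0.
    have -> : vsub z x = vadd (vscale (t k) y) (vsub (vsub z x) (vscale (t k) y)).
      by apply: vecP => i; rewrite !(tnth_vadd, tnth_vsub, tnth_vscale); ring.
    apply: le_lt_trans (tri _ _) _; rewrite enormZ ny mulr1 ger0_norm; last by lra.
    have : s = e0 / 2 by []. lra.
  split; first exact: He0.
  rewrite (vdecomp z x); apply: le_lt_trans (tri _ _) _. lra.
have hdisj : trivIset setT Q.
  move=> j k _ _ [z [hj hk]].
  apply/eqP; apply/negPn/negP => jk.
  have c1 : forall i, `|tnth (vscale (t j - t k) y) i| <= 2 * a.
    move=> i; have := hj i; have := hk i; rewrite !(tnth_vsub, tnth_vadd, tnth_vscale) ler_norml.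
    move=> /andP[h1 h2] /andP[h3 h4]; apply/andP; split; nra.
  have := enorm_coords (ltW (mulr_gt0 (ltr0Sn _ 1) ap)) c1.
  rewrite dotpZl dotpZr yy mulr1 mulrA -expr2.
  have hK : d%:R <= K ^+ 2 by rewrite -natrX ler_nat (leq_trans (leqnSn d)) // expnS leq_pmulr // expn_gt0.
  have h1 : 1 <= (j%:R - k%:R) ^+ 2 :> R.
    case: (ltngtP j k) => h.
    - have : j%:R + 1 <= k%:R :> R by rewrite natr1 ler_nat.
      nra.
    - have : k%:R + 1 <= j%:R :> R by rewrite natr1 ler_nat.
      nra.
    - by move: jk; rewrite (val_inj h) eqxx.
  have -> : t j - t k = (j%:R - k%:R) * del by rewrite /t; ring.
  have a2 : (2 * a) ^+ 2 * K ^+ 2 = (2 * del / 3) ^+ 2.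
    by rewrite -exprMn; congr (_ ^+ _); rewrite -[2 * a * K]mulrA (mulrC a K) KaE mulrA.
  move=> H.
  have H2 : ((j%:R - k%:R) * del) ^+ 2 <= (2 * del / 3) ^+ 2.
    apply: le_trans H _; rewrite -a2; have := sqr_ge0 (2 * a); rewrite expr2; nra.
  rewrite exprMn in H2.
  have : del ^+ 2 <= (j%:R - k%:R) ^+ 2 * del ^+ 2.
    by rewrite ler_peMl // sqr_ge0.
  have : 0 < del ^+ 2 by rewrite exprn_gt0.
  move: H2; rewrite !exprMn; lra.
have rho3 : rho <= 3^-1.
  by rewrite /rho lef_pV2 ?posrE //.
have rhop : 0 < rho by rewrite invr_gt0.
have hpre : forall u k, unit_ball u -> ~ Nn u -> Q k (g u) -> B u /\ 2^-1 <= enorm u.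
  move=> u k hu hN hQ.
  have hg : has_gradient psi u (g u).
    case: (pselect (has_gradient psi u (g u))) => // hng; exfalso; apply: hN.
    by apply: HNn => /= H; apply: hng; exact: H.
  have hk := key_ineq cvx hu hg sub.
  have [h1 h2] := ht k.
  have tk : 0 < t k by lra.
  have := near_y ny hu tk hk (herr k (g u) hQ).
  have D0 := enorm_ge0 (vsub u y).
  set D := enorm (vsub u y) in D0 * => HD.
  have H3 : D * (s / 2) * (2 * NN%:R) <= 2 * (del / 3) * (2 * NN%:R).
    apply: ler_wpM2r; first by rewrite mulr_ge0 // ltW.
    apply: le_trans HD; apply: ler_wpM2l => //.
  have E1 : D * (s / 2) * (2 * NN%:R) = (D * NN%:R) * s by field.
  have E2 : 2 * (del / 3) * (2 * NN%:R) = (2 / 3) * (del * (2 * NN%:R)) by ring.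
  rewrite E1 E2 delE in H3.
  have H4 : D * NN%:R <= 1.
    have : (D * NN%:R) * s <= 1 * s by apply: le_trans H3 _; rewrite ler_wpM2r // ?ltW //; lra.
    by rewrite ler_pM2r.
  have Drho : D <= rho.
    by rewrite /rho -(ler_pM2r NNp) mulVf ?gt_eqF.
  split.
    move=> i; have := coord_enorm (vsub u y) i; rewrite tnth_vsub ler_norml => /andP[H5 H6].
    rewrite -/D in H5 H6; apply/andP; split; lra.
  have := tri u (vsub y u); rewrite -(vdecomp y u) ny enorm_vsubC -/D.
  lra.
pose Qu := \big[setU/set0]_(k < NN) Q k.
have mQu : measurable Qu by apply: bigsetU_measurable => k _; exact: cube_measurable.
have hPQ : forall k, ((lr * (2 * a) ^+ d)%:E <= P (Q k))%E.
  move=> k; rewrite Pp; last exact: cube_measurable.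
  have -> : ((lr * (2 * a) ^+ d)%:E = \int[lam]_(z in Q k) (cst lr%:E) z)%E.
    rewrite integral_cst; last exact: cube_measurable.
    have E := cube_lam (vadd x (vscale (t k) y)) hl (ltW ap).
    by rewrite /Q E EFinM.
  apply: ge0_le_integral => //.
  - exact: cube_measurable.
  - by move=> z _; rewrite lee_fin ltW.
  - by apply/measurable_EFinP; apply: measurable_funS mp.
  - move=> z hz; rewrite lee_fin; have [hXz hr] := hX k z hz.
    by case/andP: (Hlr z hXz hr).
have hsum : P Qu = (\sum_(k < NN) P (Q k))%E.
  by rewrite measure_bigsetU_ord // => k; exact: cube_measurable.
have hlow : ((NN%:R * (lr * (2 * a) ^+ d))%:E <= P Qu)%E.
  rewrite hsum; apply: le_trans (_ : _ <= \sum_(k < NN) (lr * (2 * a) ^+ d)%:E)%E _.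
    by rewrite sumEFin sumr_const card_ord mulr_natl.
  by apply: lee_sum => k _; exact: hPQ k.
pose hB := (fun _ : d.-tuple R => C%:E) \_ B.
have mB : measurable B by exact: cube_measurable.
have mhB : measurable_fun [set: d.-tuple R] hB.
  by apply/(measurable_restrictT _ _).1 => //; exact: measurable_cst.
have hB0 : forall u, (0 <= hB u)%E.
  by move=> u; rewrite /hB /patch; case: ifP => _; rewrite ?lee_fin ?Cd_ge0.
have hup : (P Qu <= (C * (2 * rho) ^+ d)%:E)%E.
  rewrite -push //; rewrite /U_meas.
  have mpre : measurable (g @^-1` Qu) by rewrite -[g @^-1` Qu]setTI; apply: mg.
  apply: le_trans (_ : _ <= \int[lam]_(u in g @^-1` Qu) hB u)%E _.
    apply: (le_integral_nm (N:=Nn)) => //.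
    - by move=> u _; rewrite lee_fin u_dens_ge0.
    - move=> u hu hN; case: (pselect (unit_ball u)) => hb.
        have hu2 : Qu (g u) by exact: hu.
        have [k hk] := bigsetU_mem hu2.
        have [Bu hn] := hpre u k hb hN hk.
        by rewrite /hB patchE mem_set // lee_fin u_dens_le.
      rewrite /u_dens; have -> : (enorm u < 1) = false by apply/negbTE/negP.
      by rewrite andbF.
  apply: le_trans (_ : _ <= \int[lam]_(u in setT) hB u)%E _.
    by apply: ge0_subset_integral => //.
  rewrite -integral_mkcond integral_cst // cube_lam // ?ltW // -EFinM.
have := le_trans hlow hup; rewrite lee_fin => H.
have E3 : 2 * a = W / NN%:R.
  rewrite /a /del /W; field; rewrite ?gt_eqF //.
have E4 : 2 * rho = 2 / NN%:R by [].
rewrite E3 E4 (expr_div_n W NN%:R d) (expr_div_n 2 NN%:R d) in H.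
have Hd : 0 < NN%:R ^+ d :> R by rewrite exprn_gt0.
have H' : NN%:R * lr * W ^+ d <= C * 2 ^+ d.
  have := ler_wpM2r (ltW Hd) H.
  have -> : NN%:R * (lr * (W ^+ d / NN%:R ^+ d)) * NN%:R ^+ d = NN%:R * lr * W ^+ d.
    by field; rewrite gt_eqF.
  have -> : C * (2 ^+ d / NN%:R ^+ d) * NN%:R ^+ d = C * 2 ^+ d.
    by field; rewrite gt_eqF.
  by [].
have HM : C * 2 ^+ d < NN%:R * (lr * W ^+ d).
  by rewrite -ltr_pdivrMr ?mulr_gt0 ?exprn_gt0.
rewrite mulrA in HM; lra.
Qed.
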